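(* Let $A$ be a commutative noetherian ring with $1/2\in A$ and $P$ a projective $A$-module of rank $\ge 2$. The natural map $\mu:\pi_0(\mathbb Q'(P))\to\pi_0(\mathbb Q'(P[T]))$, $[v]\mapsto[v]$, is well defined and bijective.
   Context: For a projective module $P$ over a ring $B$, $\mathbb Q'(P)=\{(p,f,z)\in P\oplus P^*\oplus B: z^2+f(p)=1\}$. $\pi_0(\mathbb Q'(P))$ is the quotient of $\mathbb Q'(P)$ by the equivalence relation generated by: $v_0\sim v_1$ if there is $\Phi(W)\in\mathbb Q'(P[W])$ ($W$ a new variable) with $\Phi(0)=v_0$, $\Phi(1)=v_1$. Elements of $\mathbb Q'(P)$ are regarded in $\mathbb Q'(P[T])$ via base change. *)

(* Defs.v *)
From HB Require Import structures.
From mathcomp Require Import all_boot all_order all_algebra.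
From Stdlib Require Import Relations.
Set Implicit Arguments. Unset Strict Implicit. Unset Printing Implicit Defensive.
Import GRing.Theory.
Local Open Scope ring_scope.

Definition is_ideal (A : comNzRingType) (I : A -> Prop) : Prop :=
  I 0 /\ (forall x y, I x -> I y -> I (x + y)) /\ (forall a x, I x -> I (a * x)).

Definition noetherian (A : comNzRingType) : Prop :=
  forall I : nat -> A -> Prop,
    (forall k, is_ideal (I k)) ->
    (forall k x, I k x -> I k.+1 x) ->
    exists N, forall k, (N <= k)%N -> forall x, I k x -> I N x.

(* A finitely generated projective B-module P is represented as the image
   P = { p : 'rV_n | p *m e = p } of an idempotent matrix e.  Its dual P^*
   is identified with { f : 'cV_n | e *m f = f }, the functional being
   p |-> (p *m f) 0 0.  Base change along B -> B' is map_mx of e. *)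
Definition idempotent_mx (B : comNzRingType) n (e : 'M[B]_n) : Prop := e *m e = e.

(* rank of P at every prime is >= r : the fibre P (x) k has dimension >= r
   for every ring morphism from A to a field k. *)
Definition rank_ge (A : comNzRingType) n (e : 'M[A]_n) (r : nat) : Prop :=
  forall (K : fieldType) (phi : {rmorphism A -> K}), (r <= \rank (map_mx phi e))%N.

Definition triple (B : comNzRingType) n : Type := ('rV[B]_n * 'cV[B]_n * B)%type.

Definition Qp (B : comNzRingType) n (e : 'M[B]_n) (v : triple B n) : Prop :=
  let: (p, f, z) := v in
  p *m e = p /\ e *m f = f /\ z ^+ 2 + (p *m f) 0 0 = 1.

Definition map_triple (B C : comNzRingType) n (g : B -> C) (v : triple B n) : triple C n :=
  let: (p, f, z) := v in (map_mx g p, map_mx g f, g z).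

Definition htp (B : comNzRingType) n (e : 'M[B]_n) (v0 v1 : triple B n) : Prop :=
  exists Phi : triple {poly B} n,
    Qp (map_mx polyC e) Phi /\
    map_triple (fun q : {poly B} => q.[0]) Phi = v0 /\
    map_triple (fun q : {poly B} => q.[1]) Phi = v1.

Definition pi0rel (B : comNzRingType) n (e : 'M[B]_n) : relation (triple B n) :=
  clos_refl_sym_trans (triple B n) (htp e).

Definition toT (A : comNzRingType) n (v : triple A n) : triple {poly A} n :=
  map_triple (fun a : A => a%:P) v.

(* Main.v *)
Require Import Defs.
From HB Require Import structures.
From mathcomp Require Import all_boot all_order all_algebra.
From Stdlib Require Import Relations.
Local Open Scope ring_scope.
Import GRing.Theory.
Lemma map_triple_comp (B C D : comNzRingType) n (h : C -> D) (k : B -> C) (v : triple B n) :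
  map_triple h (map_triple k v) = map_triple (h \o k) v.
Proof. case: v => [[p f] z]; rewrite /map_triple. by rewrite !(map_mx_comp k h). Qed.

Lemma map_triple_eq (B C : comNzRingType) n (h k : B -> C) (v : triple B n) :
  h =1 k -> map_triple h v = map_triple k v.
Proof. move=> hk; case: v => [[p f] z]; rewrite /map_triple. by rewrite !(eq_map_mx _ hk) hk. Qed.

Lemma map_triple_id (B : comNzRingType) n (h : B -> B) (v : triple B n) :
  h =1 id -> map_triple h v = v.
Proof. move=> hk; case: v => [[p f] z]; rewrite /map_triple. by rewrite !(eq_map_mx_id _ hk) hk. Qed.

Lemma Qp_map (B C : comNzRingType) n (g : {rmorphism B -> C}) (e : 'M[B]_n) v :
  Qp e v -> Qp (map_mx g e) (map_triple g v).
Proof.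
case: v => [[p f] z] [h1 [h2 h3]] /=.
split; first by rewrite -(map_mxM g) h1.
split; first by rewrite -(map_mxM g) h2.
by rewrite -(map_mxM g) mxE -(rmorphXn g) -(rmorphD g) h3 rmorph1.
Qed.

Lemma htp_map (B C : comNzRingType) n (g : {rmorphism B -> C}) (e : 'M[B]_n) v w :
  htp e v w -> htp (map_mx g e) (map_triple g v) (map_triple g w).
Proof.
case=> Phi [hQ [h0 h1]].
exists (map_triple (map_poly g) Phi); split.
  have -> : map_mx polyC (map_mx g e) = map_mx (map_poly g) (map_mx polyC e).
    rewrite -(map_mx_comp g polyC) -(map_mx_comp polyC (map_poly g)).
    by apply: eq_map_mx => a /=; rewrite map_polyC.
  exact: Qp_map.
split.
  rewrite -h0 !map_triple_comp; apply: map_triple_eq => q /=.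
  by rewrite -(rmorph0 g) horner_map.
rewrite -h1 !map_triple_comp; apply: map_triple_eq => q /=.
by rewrite -(rmorph1 g) horner_map.
Qed.

Lemma pi0_map (B C : comNzRingType) n (g : {rmorphism B -> C}) (e : 'M[B]_n) v w :
  pi0rel e v w -> pi0rel (map_mx g e) (map_triple g v) (map_triple g w).
Proof.
elim=> [x y H|x|x y _ IH|x y z _ IH1 _ IH2].
- by apply: rst_step; apply: htp_map.
- exact: rst_refl.
- exact: rst_sym.
- exact: rst_trans IH1 IH2.
Qed.

Section Surj.
Variable A : comNzRingType.

Definition ff : {rmorphism A -> {poly {poly A}}} := (polyC \o polyC)%FUN.
Definition uu : {poly {poly A}} := 'X * ('X)%:P.
Lemma cfu : commr_rmorph ff uu.
Proof. move=> a; exact: mulrC. Qed.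
Notation ss := (horner_morph cfu).

Lemma ss_eval0 (q : {poly A}) : (ss q).[0] = (q.[0])%:P.
Proof.
elim/poly_ind: q => [|q c IH]; first by rewrite rmorph0 !horner0 polyC0.
rewrite rmorphD rmorphM /=. rewrite horner_morphX horner_morphC hornerD hornerM IH.

rewrite /uu hornerM hornerX mul0r mulr0 hornerD hornerMX hornerC !add0r mulr0 add0r.
by rewrite /ff /= hornerC.
Qed.

Lemma ss_eval1 (q : {poly A}) : (ss q).[1] = q.
Proof.
elim/poly_ind: q => [|q c IH]; first by rewrite rmorph0 horner0.
rewrite rmorphD rmorphM /= horner_morphX horner_morphC hornerD hornerM IH.
by rewrite /uu hornerM hornerX hornerC mul1r /ff /= hornerC.
Qed.
End Surj.

Theorem lemma4p3 (A : comNzRingType) (n : nat) (e : 'M[A]_n) :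
  noetherian A ->
  (exists u : A, 2%:R * u = 1) ->
  idempotent_mx e ->
  rank_ge e 2 ->
  (* mu is well defined *)
  (forall v w : triple A n, Qp e v -> Qp e w ->
     pi0rel e v w -> pi0rel (map_mx polyC e) (toT v) (toT w)) /\
  (* mu is injective *)
  (forall v w : triple A n, Qp e v -> Qp e w ->
     pi0rel (map_mx polyC e) (toT v) (toT w) -> pi0rel e v w) /\
  (* mu is surjective *)
  (forall u : triple {poly A} n, Qp (map_mx polyC e) u ->
     exists v : triple A n, Qp e v /\ pi0rel (map_mx polyC e) u (toT v)).
Proof.
move=> _ _ _ _.
have e0 : map_mx (horner_eval (0 : A)) (map_mx polyC e) = e.
  rewrite -(map_mx_comp polyC (horner_eval (0 : A))).
  by apply: eq_map_mx_id => a /=; rewrite /horner_eval hornerC.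
split; first by move=> v w _ _ H; exact: (@pi0_map _ _ _ polyC _ _ _ H).
split.
  move=> v w _ _ H; have := @pi0_map _ _ _ (horner_eval (0 : A)) _ _ _ H.
  rewrite e0 /toT !map_triple_comp !(@map_triple_id _ _ (_ \o _)) //.
  1,2: by move=> a /=; rewrite /horner_eval /= hornerC.
move=> u hu.
exists (map_triple (horner_eval (0 : A)) u); split.
  by rewrite -e0; apply: Qp_map.
apply: rst_sym; apply: rst_step.
exists (map_triple (horner_morph (cfu A)) u); split.
  have -> : map_mx polyC (map_mx polyC e) = map_mx (horner_morph (cfu A)) (map_mx polyC e).
    rewrite -(map_mx_comp polyC polyC) -(map_mx_comp polyC (horner_morph (cfu A))).
    by apply: eq_map_mx => a /=; rewrite horner_morphC.
  exact: Qp_map.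
split.
  rewrite /toT !map_triple_comp; apply: map_triple_eq => q /=.
  by rewrite ss_eval0.
rewrite map_triple_comp map_triple_id // => q /=; exact: ss_eval1.
Qed.
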